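(* Under the hypotheses of Theorem 2 (A1, A2, A3(D), $\beta\in[0,1)$, $0<\eta<2N/(\sigma_{\max}^2H_{\ell^{-1}(N\mathcal{L}(w(1)))})$), the GDM iterates satisfy $$\sum_{t=1}^\infty\|w(t+1)-w(t)\|^2<\infty\quad\text{and}\quad\|w(t)\|=O(\sqrt t).$$
   Context: Setting. The data are $S=\{x_1,\dots,x_N\}\subset\mathbb{R}^d$, with labels absorbed. The empirical loss is $\mathcal{L}(w)=\frac1N\sum_i\ell(\langle w,x_i\rangle)$. $\sigma_{\max}$ is the spectral norm of $(x_1,\dots,x_N)$. A1: there is $w$ with $\langle w,x_i\rangle>0$ for all $i$. A2: $\ell$ is differentiable, $\ell'<0$, $\ell(x),\ell'(x)\to0$ as $x\to\infty$, and $\limsup_{x\to-\infty}\ell'(x)<0$. There are positive $\mu_\pm,x_\pm$ with $-\ell'(x)\le(1+e^{-\mu_+x})e^{-x}$ for $x>x_+$ and $-\ell'(x)\ge(1-e^{-\mu_-x})e^{-x}$ for $x>x_-$. $\ell^{-1}$ is the inverse of $\ell:\mathbb{R}\to(0,\infty)$. A3(D): $H_{s_0}$ is the smallest constant with $|\ell'(x)-\ell'(y)|\le H_{s_0}|x-y|$ for $x,y\ge s_0$ (finite for every $s_0$). GDM: $m(0)=0$, $m(t)=\beta m(t-1)+(1-\beta)\nabla\mathcal{L}(w(t))$, $w(t+1)=w(t)-\eta m(t)$ for $t\ge1$, from an arbitrary $w(1)$. *)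

(* Defs.v *)
From HB Require Import structures.
From mathcomp Require Import all_boot all_order all_algebra.
From mathcomp Require Import all_classical all_reals all_analysis.
Set Implicit Arguments. Unset Strict Implicit. Unset Printing Implicit Defensive.
Import Order.TTheory GRing.Theory Num.Theory.
Import numFieldNormedType.Exports.
Local Open Scope classical_set_scope.
Local Open Scope ring_scope.

Section Defs.
Variable R : realType.

Definition enorm (m n : nat) (A : 'M[R]_(m, n)) : R :=
  Num.sqrt (\sum_(i < m) \sum_(j < n) A i j ^+ 2).

Definition spectral_norm (m n : nat) (A : 'M[R]_(m, n)) : R :=
  inf [set c : R | 0 <= c /\ forall v : 'cV[R]_n, enorm (A *m v) <= c * enorm v].

Definition lip_const_above (f : R -> R) (s0 : R) : R :=
  inf [set c : R | 0 <= c /\ forall x y, s0 <= x -> s0 <= y ->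
                      `|f x - f y| <= c * `|x - y|].

(* Data matrix X : 'M_(d, N) whose i-th column is x_i (labels absorbed). *)
Definition margin (d N : nat) (X : 'M[R]_(d, N)) (w : 'rV[R]_d) (i : 'I_N) : R :=
  \sum_(j < d) w 0 j * X j i.

Definition emp_loss (d N : nat) (l : R -> R) (X : 'M[R]_(d, N)) (w : 'rV[R]_d) : R :=
  N%:R^-1 * \sum_(i < N) l (margin X w i).

Definition emp_grad (d N : nat) (l : R -> R) (X : 'M[R]_(d, N)) (w : 'rV[R]_d)
  : 'rV[R]_d :=
  \row_(j < d) (N%:R^-1 * \sum_(i < N) derive1 l (margin X w i) * X j i).

End Defs.

(* Main.v *)
Require Import Defs.
From HB Require Import structures.
From mathcomp Require Import all_boot all_order all_algebra.
From mathcomp Require Import all_classical all_reals all_analysis.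
From mathcomp Require Import ring lra.
Set Implicit Arguments. Unset Strict Implicit. Unset Printing Implicit Defensive.
Import Order.TTheory GRing.Theory Num.Theory.
Import numFieldNormedType.Exports.
Local Open Scope classical_set_scope.
Local Open Scope ring_scope.

Section L.
Variable R : realType.
Variable l : R -> R.
Hypothesis ld : forall x : R, derivable l x 1.
Hypothesis lneg : forall x : R, derive1 l x < 0.

Lemma l_isd (x : R) : is_derive x 1 l (derive1 l x).
Proof. rewrite derive1E; exact: derivableP. Qed.

Lemma l_cont (a b : R) : {within `[a, b], continuous l}.
Proof. apply: derivable_within_continuous => x _; exact: ld. Qed.

Lemma l_decr x y : x < y -> l y < l x.
Proof.
move=> xy; have [c _ E] := MVT xy (fun z _ => l_isd z) (@l_cont x y).
rewrite -subr_gt0 -opprB E -mulNr; apply: mulr_gt0; last by rewrite subr_gt0.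
by rewrite oppr_gt0.
Qed.

Lemma l_pos (lim0 : l x @[x --> +oo] --> 0) x : 0 < l x.
Proof.
have h : l (x+1) < l x by apply: l_decr; rewrite ltrDl.
apply: (le_lt_trans _ h).
have <- : lim (l y @[y --> +oo]) = 0 by apply: cvg_lim.
apply: limr_le; first by apply/cvg_ex; exists 0.
near=> y.
have : x + 1 <= y by near: y; apply: nbhs_pinfty_ge; rewrite num_real.
rewrite le_eqVlt => /orP[/eqP <- //|lt]; exact/ltW/l_decr.
Unshelve. all: by end_near.
Qed.

Variable s1 : R.
Hypothesis A3 : exists c : R, 0 <= c /\ forall x y, s1 <= x -> s1 <= y ->
       `|derive1 l x - derive1 l y| <= c * `|x - y|.

Lemma lip_prop x y : s1 <= x -> s1 <= y ->
  `|derive1 l x - derive1 l y| <= lip_const_above (derive1 l) s1 * `|x - y|.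
Proof.
move=> hx hy; have [->|xy] := eqVneq x y; first by rewrite !subrr normr0 mulr0.
have pxy : 0 < `|x - y| by rewrite normr_gt0 subr_eq0.
rewrite -ler_pdivrMr //; apply: lb_le_inf.
  by case: A3 => c hc; exists c.
by move=> c [c0 hc]; rewrite ler_pdivrMr //; apply: hc.
Qed.

Lemma lip_ge0 : 0 <= lip_const_above (derive1 l) s1.
Proof.
apply: lb_le_inf; first by case: A3 => c hc; exists c.
by move=> c [].
Qed.

Lemma desc1 x y : s1 <= x -> s1 <= y ->
  l y <= l x + derive1 l x * (y - x) + lip_const_above (derive1 l) s1 / 2 * (y - x) ^+ 2.
Proof.
move=> hx hy; set H := lip_const_above _ _; set c := derive1 l x.
pose g u := l u - (c * u + H / 2 * (u - x) ^+ 2).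
have dg (u : R) : is_derive u 1 g (derive1 l u - (c + H / 2 * (2 * (u - x)))).
  rewrite /g; apply: is_deriveB; first exact: l_isd.
  apply: is_deriveD.
    apply: is_derive_eq (is_deriveZ c (@is_derive_id _ _ u 1)) _.
    by rewrite /= /GRing.scale /= mulr1.
  have e : (fun z : R => H / 2 * (z - x) ^+ 2) = (H/2) \*: ((shift (-x)) ^+ 2).
    by apply/funext => z /=; rewrite /GRing.scale /= !expr2.
  rewrite e; apply: is_derive_eq (is_deriveZ _ (is_deriveX 2 (@is_derive_shift _ u 1 (-x)))) _.
  rewrite /GRing.scale /= expr1 mulr1; congr (_ * _); rewrite /shift mulr2n mulrDl mul1r; by [].
have gc a b : {within `[a, b], continuous g}.
  by apply: derivable_within_continuous => z _; case: (dg z).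
suff : g y <= g x.
  rewrite /g subrr expr0n /= mulr0 addr0 => h; lra.
have [xy|yx|<-] := ltgtP x y; last by [].
- have [z /andP[] xz zy E] := MVT xy (fun z _ => dg z) (gc x y).
  rewrite -subr_le0 E pmulr_lle0 ?subr_gt0 //.
  have := @lip_prop z x (le_trans hx (ltW xz)) hx.
  rewrite [`|z - x|]gtr0_norm ?subr_gt0 // ler_norml => /andP[_ h]; rewrite /c; lra.
- have [z /andP[] yz zx E] := MVT yx (fun z _ => dg z) (gc y x).
  rewrite -subr_ge0 E pmulr_lge0 ?subr_gt0 //.
  have := @lip_prop z x (le_trans hy (ltW yz)) hx.
  rewrite [`|z - x|]ltr0_norm ?subr_lt0 // ler_norml => /andP[h _]; rewrite /c; lra.
Qed.
End L.
Section Alg.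
Variable R : realType.

Lemma sq_step (n Q S x : R) : 0 <= n -> 0 <= Q -> S ^+ 2 <= n * Q ->
  (S + x) ^+ 2 <= (n + 1) * (Q + x ^+ 2).
Proof.
move=> n0 Q0 h; have [e|np] := eqVneq n 0.
  rewrite e mul0r in h; rewrite e.
  have S0 : S = 0 by apply/eqP; rewrite -sqrf_eq0 eq_le sqr_ge0 andbT h.
  rewrite S0; nra.
have np' : 0 < n by rewrite lt_def np.
have : 0 <= (S - n * x) ^+ 2 by apply: sqr_ge0.
have : 0 <= n * (Q + n * x ^+ 2 - 2 * S * x) -> 0 <= Q + n * x ^+ 2 - 2 * S * x.
  by rewrite pmulr_rge0.
nra.
Qed.

Lemma sum_sq_le n (x : 'I_n -> R) :
  (\sum_(i < n) x i) ^+ 2 <= n%:R * \sum_(i < n) x i ^+ 2.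
Proof.
elim: n x => [|n ih] x; first by rewrite !big_ord0 expr0n /= mul0r.
rewrite !big_ord_recr /=.
have Q0 : 0 <= \sum_(i < n) x (widen_ord (leqnSn n) i) ^+ 2.
  by apply: sumr_ge0 => i _; apply: sqr_ge0.
by have := @sq_step n%:R _ _ (x ord_max) (ler0n _ n) Q0 (ih _); rewrite natr1.
Qed.

Lemma term_le_sum n (F : 'I_n -> R) j : (forall i, 0 <= F i) -> F j <= \sum_i F i.
Proof.
move=> h; rewrite (bigD1 j) //= lerDl; apply: sumr_ge0 => i _; exact: h.
Qed.

Lemma sum_sq_eq0 n (F : 'I_n -> R) : \sum_i F i ^+ 2 = 0 -> forall i, F i = 0.
Proof.
move=> h i; apply/eqP; rewrite -sqrf_eq0; apply/eqP.
by move: h => /eqP; rewrite psumr_eq0 => [/allP/(_ i)/(_ (mem_index_enum _))/implyP/(_ isT)/eqP|j _]; [|apply: sqr_ge0].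
Qed.


Variables (d N : nat) (X : 'M[R]_(d, N)).

Definition dot (u v : 'rV[R]_d) := \sum_(j < d) u 0 j * v 0 j.
Definition sq u := dot u u.

Lemma sq_ge0 u : 0 <= sq u.
Proof. by apply: sumr_ge0 => j _; rewrite -expr2 sqr_ge0. Qed.

Lemma enorm_rV (u : 'rV[R]_d) : enorm u = Num.sqrt (sq u).
Proof. by rewrite /enorm big_ord1 /sq /dot; under eq_bigr do rewrite expr2. Qed.

Lemma enorm_cV n (v : 'cV[R]_n) : enorm v = Num.sqrt (\sum_(i < n) v i 0 ^+ 2).
Proof. by rewrite /enorm; under eq_bigr do rewrite big_ord1. Qed.

Lemma marginD u v i : margin X (u + v) i = margin X u i + margin X v i.
Proof. by rewrite /margin -big_split /=; apply: eq_bigr => j _; rewrite mxE mulrDl. Qed.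

Lemma marginZ s u i : margin X (s *: u) i = s * margin X u i.
Proof. by rewrite /margin mulr_sumr; apply: eq_bigr => j _; rewrite mxE mulrA. Qed.

Lemma marginN u i : margin X (- u) i = - margin X u i.
Proof. by rewrite -scaleN1r marginZ mulN1r. Qed.

Lemma marginB u v i : margin X (u - v) i = margin X u i - margin X v i.
Proof. by rewrite marginD marginN. Qed.

Definition Frob := \sum_(i < d) \sum_(k < N) X i k ^+ 2.

Lemma Frob_ge0 : 0 <= Frob.
Proof. by apply: sumr_ge0 => i _; apply: sumr_ge0 => k _; apply: sqr_ge0. Qed.

Lemma mulmx_bound (v : 'cV[R]_N) :
  enorm (X *m v) <= Num.sqrt (N%:R * Frob) * enorm v.
Proof.
rewrite !enorm_cV; set V := \sum_(i < N) v i 0 ^+ 2.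
have V0 : 0 <= V by apply: sumr_ge0 => i _; apply: sqr_ge0.
rewrite -sqrtrM ?mulr_ge0 ?Frob_ge0 // ler_sqrt; last first.
  by rewrite !mulr_ge0 ?Frob_ge0.
have -> : N%:R * Frob * V = \sum_(i < d) (N%:R * (\sum_(k < N) X i k ^+ 2) * V).
  by rewrite -big_distrl -big_distrr.
apply: ler_sum => i _.
rewrite mxE; apply: le_trans; first exact: sum_sq_le.
rewrite -mulrA ler_wpM2l // mulr_suml; apply: ler_sum => k _.
rewrite exprMn ler_wpM2l ?sqr_ge0 //.
by apply: (@term_le_sum _ (fun k => v k 0 ^+ 2)) => j; apply: sqr_ge0.
Qed.

Definition sig := spectral_norm X.

Lemma sig_prop (v : 'cV[R]_N) : enorm (X *m v) <= sig * enorm v.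
Proof.
have ne : nonempty [set c : R | 0 <= c /\ forall v : 'cV[R]_N, enorm (X *m v) <= c * enorm v].
  by exists (Num.sqrt (N%:R * Frob)); split => //; apply: mulmx_bound.
have [e0|ep] := eqVneq (enorm v) 0.
  by have := mulmx_bound v; rewrite e0 !mulr0.
have epos : 0 < enorm v by rewrite lt_def ep /enorm sqrtr_ge0.
rewrite -ler_pdivrMr //; apply: lb_le_inf => // c [c0 hc].
by rewrite ler_pdivrMr.
Qed.

Lemma sig_ge0 : 0 <= sig.
Proof.
apply: lb_le_inf; last by move=> c [].
by exists (Num.sqrt (N%:R * Frob)); split => //; apply: mulmx_bound.
Qed.


Lemma margin_bound (u : 'rV[R]_d) : 0 < sig ->
  \sum_(i < N) margin X u i ^+ 2 <= sig ^+ 2 * sq u.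
Proof.
move=> sp; set B := \sum_(i < N) margin X u i ^+ 2.
pose v : 'cV[R]_N := \col_i margin X u i.
pose y j := (X *m v) j 0.
have B0 : 0 <= B by apply: sumr_ge0 => i _; apply: sqr_ge0.
have eB : B = \sum_(j < d) u 0 j * y j.
  rewrite /B /y (eq_bigr (fun i => \sum_(j < d) u 0 j * (X j i * v i 0))) => [|i _].
    rewrite exchange_big /=; apply: eq_bigr => j _; rewrite mxE big_distrr /=.
    by apply: eq_bigr => i _.
  rewrite expr2 {2}/margin big_distrl /=; apply: eq_bigr => j _.
  by rewrite mxE mulrA.
have hY : \sum_(j < d) y j ^+ 2 <= sig ^+ 2 * B.
  have := sig_prop v; rewrite !enorm_cV.
  have -> : \sum_(i < N) v i 0 ^+ 2 = B by apply: eq_bigr => i _; rewrite mxE.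
  move=> h; have := h; rewrite -(ler_pXn2r (n := 2)) ?nnegrE ?sqrtr_ge0 ?mulr_ge0 ?sig_ge0 //.
  rewrite exprMn !sqr_sqrtr //; apply: sumr_ge0 => j _; apply: sqr_ge0.
have s2 : 0 < sig ^+ 2 by rewrite exprn_gt0.
have h2 : 2 * B <= sig ^+ 2 * sq u + (\sum_(j < d) y j ^+ 2) / sig ^+ 2.
  rewrite eB /sq /dot mulr_sumr big_distrr /= mulr_suml -big_split /=.
  apply: ler_sum => j _.
  have : 0 <= (sig ^+ 2 * u 0 j - y j) ^+ 2 / sig ^+ 2 by rewrite divr_ge0 ?sqr_ge0 ?ltW.
  rewrite sqrrB mulrDl mulrBl; set a := u 0 j; set b := y j; set s := sig ^+ 2.
  have -> : (s * a) ^+ 2 / s = s * (a * a) by field; rewrite gt_eqF.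
  have -> : s * a * b *+ 2 / s = 2 * (a * b) by rewrite -mulr_natr; field; rewrite gt_eqF.
  lra.
have : (\sum_(j < d) y j ^+ 2) / sig ^+ 2 <= B.
  by rewrite ler_pdivrMr // mulrC.
lra.
Qed.

End Alg.

Section Main.
Variable R : realType.
Variables (d N : nat) (X : 'M[R]_(d, N)) (l : R -> R).
Hypothesis ld : forall x : R, derivable l x 1.
Hypothesis lneg : forall x : R, derive1 l x < 0.
Variable s1 : R.
Hypothesis A3 : exists c : R, 0 <= c /\ forall x y, s1 <= x -> s1 <= y ->
       `|derive1 l x - derive1 l y| <= c * `|x - y|.

Local Notation H := (lip_const_above (derive1 l) s1).
Local Notation f := (emp_loss l X).
Local Notation g := (emp_grad l X).
Local Notation a w i := (margin X w i).

Lemma dot_grad w u : dot (g w) u = N%:R^-1 * \sum_(i < N) derive1 l (a w i) * a u i.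
Proof.
rewrite /dot /margin big_distrr /=.
rewrite (eq_bigr (fun j => \sum_(i < N) N%:R^-1 * (derive1 l (a w i) * (u 0 j * X j i)))) => [|j _].
  rewrite exchange_big /=; apply: eq_bigr => i _; by rewrite -big_distrr /= -big_distrr.
rewrite mxE -mulrA big_distrl big_distrr /=; apply: eq_bigr => i _.
by rewrite -mulrA [X j i * _]mulrC.
Qed.

Lemma dotC (u v : 'rV[R]_d) : dot u v = dot v u.
Proof. by apply: eq_bigr => j _; rewrite mulrC. Qed.

Lemma dotDl (u v x : 'rV[R]_d) : dot (u + v) x = dot u x + dot v x.
Proof. by rewrite /dot -big_split; apply: eq_bigr => j _; rewrite mxE mulrDl. Qed.

Lemma dotZl s (u x : 'rV[R]_d) : dot (s *: u) x = s * dot u x.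
Proof. by rewrite /dot mulr_sumr; apply: eq_bigr => j _; rewrite mxE mulrA. Qed.

Lemma dotNl (u x : 'rV[R]_d) : dot (- u) x = - dot u x.
Proof. by rewrite -scaleN1r dotZl mulN1r. Qed.

Lemma dot_le (u v : 'rV[R]_d) : 2 * dot u v <= sq u + sq v.
Proof.
rewrite /sq /dot big_distrr -big_split /=; apply: ler_sum => j _.
have := sqr_ge0 (u 0 j - v 0 j); rewrite sqrrB; lra.
Qed.

Lemma loss_eq w : f w = N%:R^-1 * \sum_(i < N) l (a w i).
Proof. by []. Qed.

Lemma descN w u s : (forall i, s1 <= a w i) -> (forall i, s1 <= a w i + s * a u i) ->
  f (w + s *: u) <= f w + s * dot (g w) u + H / 2 * N%:R^-1 * s ^+ 2 * \sum_(i < N) a u i ^+ 2.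
Proof.
move=> h1 h2; rewrite !loss_eq dot_grad.
rewrite mulrCA mulrA -[H / 2 * _ * _]mulrA [H / 2 * _]mulrC -!mulrA -!mulrDr.
rewrite ler_wpM2l ?invr_ge0 ?ler0n // !big_distrr -!big_split /=.
apply: ler_sum => i _; rewrite marginD marginZ.
have := desc1 ld A3 (h1 i) (h2 i).
rewrite (addrC (a w i)) addrK exprMn; nra.
Qed.


Hypothesis lim0 : l x @[x --> +oo] --> 0.
Variables beta eta f1 : R.
Hypotheses (hb0 : 0 <= beta) (hb1 : beta < 1) (heta : 0 < eta) (hN : (0 < N)%N).
Hypothesis hsig : 0 < sig X.
Hypothesis hstep : eta * (H * sig X ^+ 2 / N%:R) < 2.
Hypothesis hf1 : l s1 = N%:R * f1.

Local Notation alpha := (eta * (1 - beta)).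
Local Notation k := (beta / (2 * alpha)).
Local Notation Lc := (H * sig X ^+ 2 / N%:R).
Local Notation cp := (alpha^-1 - k - Lc / 2).
Local Notation cc := (eta^-1 - Lc / 2).

Lemma lpos x : 0 < l x.
Proof. exact: (l_pos ld lneg lim0). Qed.

Lemma omb_neq0 : 1 - beta != 0.
Proof. by rewrite subr_eq0 gt_eqF. Qed.

Lemma alpha_gt0 : 0 < alpha.
Proof. by rewrite mulr_gt0 // subr_gt0. Qed.

Lemma k_ge0 : 0 <= k.
Proof. by rewrite divr_ge0 // mulr_ge0 // ltW // alpha_gt0. Qed.

Lemma Nr_gt0 : 0 < N%:R :> R.
Proof. by rewrite ltr0n. Qed.

Lemma Lc_ge0 : 0 <= Lc.
Proof. by rewrite divr_ge0 ?ler0n // mulr_ge0 ?sqr_ge0 // lip_ge0. Qed.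

Lemma cc_gt0 : 0 < cc.
Proof.
have -> : eta^-1 - Lc / 2 = (2 - eta * Lc) / (2 * eta) by field; rewrite !gt_eqF // Nr_gt0.
by rewrite divr_gt0 ?mulr_gt0 // subr_gt0.
Qed.

Lemma cp_cc : cp - k = cc.
Proof.
have a0 := alpha_gt0; have : 1 - beta != 0 by rewrite subr_eq0 gt_eqF.
move=> hb; field; by rewrite hb (gt_eqF heta) (gt_eqF Nr_gt0).
Qed.

Lemma N_f w : N%:R * f w = \sum_(i < N) l (a w i).
Proof. by rewrite loss_eq mulrA mulfV ?mul1r // gt_eqF // Nr_gt0. Qed.

Lemma margins_ge w : f w <= f1 -> forall i, s1 <= a w i.
Proof.
move=> h i; rewrite leNgt; apply/negP => lt.
have := l_decr ld lneg lt.
have : l (a w i) <= \sum_(j < N) l (a w j).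
  by apply: (@term_le_sum _ _ (fun j => l (a w j))) => j; apply: ltW; apply: lpos.
rewrite -N_f => h1.
have : N%:R * f w <= N%:R * f1 by rewrite ler_wpM2l // ler0n.
rewrite -hf1; lra.
Qed.


Lemma dot_gd w p dv : dv = beta *: p - alpha *: g w ->
  dot (g w) dv <= k * sq p + (k - alpha^-1) * sq dv.
Proof.
move=> hd.
have e : sq dv = beta * dot p dv - alpha * dot (g w) dv.
  by rewrite {1}/sq {1}hd dotDl dotNl !dotZl.
have hl := dot_le p dv.
have a0 := alpha_gt0.
have -> : dot (g w) dv = alpha^-1 * (beta * dot p dv - sq dv).
  by rewrite e; field; rewrite omb_neq0 (gt_eqF heta).
have : beta * (2 * dot p dv) <= beta * (sq p + sq dv) by rewrite ler_wpM2l.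
have -> : k * sq p + (k - alpha^-1) * sq dv = alpha^-1 * (beta / 2 * (sq p + sq dv) - sq dv).
  by field; rewrite omb_neq0 (gt_eqF heta).
move=> h; rewrite ler_pM2l ?invr_gt0 //; lra.
Qed.

Lemma gen_desc w p dv s : dv = beta *: p - alpha *: g w ->
  0 <= s <= 1 -> (forall i, s1 <= a w i) -> (forall i, s1 <= a w i + s * a dv i) ->
  f (w + s *: dv) <= f w + k * sq p - s * cp * sq dv.
Proof.
move=> hd /andP[s0 s1'] h1 h2.
have hD := descN h1 h2.
have hB := margin_bound dv hsig.
have hG := dot_gd hd.
have P0 := sq_ge0 p; have D0 := sq_ge0 dv; have k0 := k_ge0; have L0 := Lc_ge0.
have F2 : s * dot (g w) dv <= s * k * sq p + s * (k - alpha^-1) * sq dv.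
  by apply: le_trans (ler_wpM2l s0 hG) _; rewrite mulrDr !mulrA.
have F3 : H / 2 * N%:R^-1 * s ^+ 2 * \sum_(i < N) a dv i ^+ 2 <= Lc / 2 * s * sq dv.
  have -> : Lc / 2 * s * sq dv = H / 2 * N%:R^-1 * s * (sig X ^+ 2 * sq dv) by rewrite mulrC; field; rewrite gt_eqF // Nr_gt0.
  set B := \sum_(i < N) a dv i ^+ 2.
  have B0 : 0 <= B by apply: sumr_ge0 => i _; apply: sqr_ge0.
  have -> : H / 2 * N%:R^-1 * s ^+ 2 * B = H / 2 * N%:R^-1 * s * (s * B) by ring.
  apply: ler_wpM2l; first by rewrite !mulr_ge0 ?invr_ge0 ?ler0n ?lip_ge0.
  by apply: le_trans hB; rewrite ler_piMl.
have F4 : s * k * sq p <= k * sq p by rewrite -mulrA; exact: (ler_piMl (mulr_ge0 k_ge0 (sq_ge0 p)) s1').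
have F5 : Lc / 2 * s * sq dv + s * (k - alpha^-1) * sq dv = - (s * cp * sq dv).
  by ring.
lra.
Qed.


Lemma sq0_margin (v : 'rV[R]_d) i : sq v = 0 -> a v i = 0.
Proof.
move=> h; have : \sum_(j < d) v 0 j ^+ 2 = sq v.
  by apply: eq_bigr => j _; rewrite expr2.
rewrite h.
move/sum_sq_eq0 => h0; rewrite /margin big1 // => j _; by rewrite h0 mul0r.
Qed.

Lemma margin_g1 w i0 : (forall j : 'I_N, j = i0) ->
  a (g w) i0 = N%:R^-1 * derive1 l (a w i0) * \sum_(c < d) X c i0 ^+ 2.
Proof.
move=> hall; rewrite /margin mulr_sumr; apply: eq_bigr => c _; rewrite mxE.
rewrite (bigD1 i0) //= big1 ?addr0 => [|j /eqP []]; last exact: hall.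
by rewrite expr2 !mulrA.
Qed.

Lemma cp_gt0 : 0 < cp.
Proof. have := cp_cc; have := cc_gt0; have := k_ge0; lra. Qed.

Lemma step w p dv : dv = beta *: p - alpha *: g w -> f w + k * sq p <= f1 ->
  f (w + dv) + k * sq dv <= f w + k * sq p - cc * sq dv.
Proof.
move=> hd hE.
have kP0 : 0 <= k * sq p by rewrite mulr_ge0 ?k_ge0 ?sq_ge0.
have hfw : f w <= f1 by lra.
have ha := margins_ge hfw.
suff hb : forall i, s1 <= a w i + a dv i.
  have h01 : (0 <= (1:R) <= 1) by rewrite ler01 lexx.
  have hbb : forall i, s1 <= a w i + 1 * a dv i by move=> i; rewrite mul1r.
  have := @gen_desc w p dv 1 hd h01 ha hbb.
  rewrite scale1r mul1r => h.
  have : cp * sq dv = cc * sq dv + k * sq dv by rewrite -cp_cc; ring.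
  lra.
move=> i1; rewrite leNgt; apply/negP => hi1.
pose P := fun i => a w i + a dv i < s1.
pose r := fun i => (a w i - s1) / (- a dv i).
have bneg j : P j -> a dv j < 0.
  by rewrite /P => hj; have := ha j; lra.
case: (@arg_minP _ _ _ i1 P r hi1) => i0 Pi0 hmin.
set s := r i0.
have b0 := bneg _ Pi0.
have nb0 : 0 < - a dv i0 by rewrite oppr_gt0.
have hs0 : 0 <= s by rewrite /s /r divr_ge0 // ?subr_ge0 ?ha // ltW.
have hs1 : s < 1 by rewrite /s /r ltr_pdivrMr // mul1r; move: Pi0; rewrite /P; lra.
have rb j : P j -> a w j + r j * a dv j = s1.
  move=> Pj; have := bneg _ Pj => bj; rewrite /r; field; by rewrite lt_eqF.
have hmarg j : s1 <= a w j + s * a dv j.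
  case Pj: (P j).
  - have := hmin j Pj; rewrite -/s => srj.
    have := rb j Pj; have := bneg _ Pj => bj.
    have : r j * a dv j <= s * a dv j by rewrite ler_wnM2r // ltW.
    lra.
  - move/negbT: Pj; rewrite /P -leNgt => hj.
    have := ha j => haj.
    have e1 : 0 <= (1 - s) * (a w j - s1) by rewrite mulr_ge0 // subr_ge0 // ltW.
    have e2 : 0 <= s * (a w j + a dv j - s1) by rewrite mulr_ge0 // subr_ge0.
    nra.
have heq : a w i0 + s * a dv i0 = s1 by apply: rb.
have hgd := @gen_desc w p dv s hd (introT andP (conj hs0 (ltW hs1))) ha hmarg.
have hl : l s1 <= N%:R * f (w + s *: dv).
  rewrite N_f -heq -marginZ -marginD.
  by apply: (@term_le_sum _ _ (fun j => l (a (w + s *: dv) j))) => j; apply: ltW; apply: lpos.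
have NfE : N%:R * f (w + s *: dv) <= N%:R * (f w + k * sq p - s * cp * sq dv).
  by rewrite ler_wpM2l ?ler0n.
have Np := Nr_gt0.
have [sp|] := ltP 0 s.
  have D0 : 0 < sq dv.
    rewrite lt_def sq_ge0 andbT; apply/eqP => D0.
    by move: b0; rewrite (sq0_margin i0 D0) ltxx.
  have : 0 < s * cp * sq dv by apply: mulr_gt0 => //; apply: mulr_gt0 => //; exact: cp_gt0.
  move=> hpos.
  have : N%:R * (f w + k * sq p - s * cp * sq dv) < N%:R * f1.
    by rewrite ltr_pM2l //; lra.
  rewrite -hf1; lra.
move=> s0'; have s0 : s = 0 by apply/eqP; rewrite eq_le s0' hs0.
rewrite s0 mul0r addr0 in heq.
have hsum : \sum_(j < N) l (a w j) + N%:R * (k * sq p) <= l s1.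
  rewrite -N_f hf1 -mulrDr ler_wpM2l ?ler0n //.
rewrite (bigD1 i0) //= heq in hsum.
set rest := \sum_(j < N | j != i0) l (a w j) in hsum.
have NkP : 0 <= N%:R * (k * sq p) by rewrite mulr_ge0 ?ler0n.
have hall : forall j : 'I_N, j = i0.
  move=> j; apply/eqP; apply/negPn/negP => ne.
  have : l (a w j) <= rest.
    rewrite /rest (bigD1 j) //= lerDl; apply: sumr_ge0 => j0 _; apply: ltW; apply: lpos.
  have := lpos (a w j); lra.
have kPz : k * sq p = 0.
  have r0 : 0 <= rest by apply: sumr_ge0 => j0 _; apply: ltW; apply: lpos.
  have : N%:R * (k * sq p) = 0 by lra.
  by move/eqP; rewrite mulf_eq0 (gt_eqF Np) /= => /eqP.
have hbp : beta * a p i0 = 0.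
  move/eqP: kPz; rewrite mulf_eq0 => /orP[|/eqP/(sq0_margin i0) ->]; last by rewrite mulr0.
  rewrite mulf_eq0 invr_eq0 mulf_eq0 (gt_eqF alpha_gt0) orbF /= pnatr_eq0 orbF.
  by move/eqP => ->; rewrite mul0r.
have eb : a dv i0 = beta * a p i0 - alpha * a (g w) i0 by rewrite hd marginB !marginZ.
rewrite hbp sub0r (margin_g1 w hall) in eb.
have : N%:R^-1 * derive1 l (a w i0) * \sum_(c < d) X c i0 ^+ 2 <= 0.
  apply: mulr_le0_ge0; last by apply: sumr_ge0 => c _; apply: sqr_ge0.
  by apply: mulr_ge0_le0; rewrite ?invr_ge0 ?ler0n // ltW.
move=> h.
have : alpha * (N%:R^-1 * derive1 l (a w i0) * \sum_(c < d) X c i0 ^+ 2) <= 0.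
  by apply: mulr_ge0_le0 => //; apply: ltW; exact: alpha_gt0.
lra.
Qed.


Variables (w m : nat -> 'rV[R]_d).
Hypothesis hm0 : m 0%N = 0.
Hypothesis hm : forall t : nat, (1 <= t)%N ->
     m t = beta *: m t.-1 + (1 - beta) *: g (w t).
Hypothesis hw : forall t : nat, (1 <= t)%N -> w t.+1 = w t - eta *: m t.
Hypothesis hw1 : f (w 1%N) = f1.

Local Notation D t := (- eta *: m t).

Lemma D_rec t : (1 <= t)%N -> D t = beta *: D t.-1 - alpha *: g (w t).
Proof.
move=> ht; rewrite hm // scalerDr !scalerA; congr (_ + _); [by rewrite mulrC | by rewrite mulNr scaleNr].
Qed.

Lemma w_rec t : (1 <= t)%N -> w t.+1 = w t + D t.
Proof. by move=> ht; rewrite hw // scaleNr. Qed.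

Lemma energy t : (1 <= t)%N ->
  f (w t) + k * sq (D t.-1) + cc * \sum_(1 <= j < t) sq (D j) <= f1.
Proof.
elim: t => [//|t IH] _.
case: t IH => [|t] IH.
  rewrite big_geq // mulr0 addr0 /= hm0 scaler0 hw1.
  by rewrite /sq /dot big1 ?mulr0 ?addr0 // => j _; rewrite mxE mul0r.
have := IH isT => h.
have S0 : 0 <= \sum_(1 <= j < t.+1) sq (D j) by apply: sumr_ge0 => j _; apply: sq_ge0.
have c0 := cc_gt0.
have hE : f (w t.+1) + k * sq (D t) <= f1.
  have : 0 <= cc * \sum_(1 <= j < t.+1) sq (D j) by rewrite mulr_ge0 // ltW.
  move: h => /=; lra.
have := @step (w t.+1) (D t) (D t.+1) (@D_rec t.+1 isT) hE.
rewrite -w_rec // big_nat_recr //= [cc * (_ + _)]mulrDr.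
move: h => /=; lra.
Qed.

Lemma f_ge0 v : 0 <= f v.
Proof.
by rewrite loss_eq mulr_ge0 ?invr_ge0 ?ler0n //; apply: sumr_ge0 => i _; apply: ltW; apply: lpos.
Qed.

Lemma sum_bound n : \sum_(1 <= j < n) sq (D j) <= f1 / cc.
Proof.
have c0 := cc_gt0.
case: n => [|n]; first by rewrite big_geq // divr_ge0 ?(ltW c0) // -hw1; apply: f_ge0.
have := energy (isT : (1 <= n.+1)%N).
have := f_ge0 (w n.+1); have : 0 <= k * sq (D n.+1.-1) by rewrite mulr_ge0 ?k_ge0 ?sq_ge0.
move=> h1 h2 h3; rewrite ler_pdivlMr // mulrC; lra.
Qed.

Lemma w_bound t : (1 <= t)%N ->
  sq (w t) <= t%:R * (sq (w 1%N) + \sum_(1 <= j < t) sq (D j)).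
Proof.
move=> ht.
have hc : forall j, (w t) 0 j ^+ 2 <= t%:R * ((w 1%N) 0 j ^+ 2 + \sum_(1 <= k0 < t) (D k0) 0 j ^+ 2).
  move=> j; elim: t ht => [//|t IH] _.
  case: t IH => [|t] IH.
    by rewrite big_geq // addr0 mul1r.
  have := IH isT => h.
  rewrite w_rec // mxE big_nat_recr //= addrA -natr1.
  apply: sq_step => //; rewrite ?ler0n //.
  by rewrite addr_ge0 ?sqr_ge0 //; apply: sumr_ge0 => i _; apply: sqr_ge0.
rewrite /sq /dot.
have -> : \sum_(j < d) w t 0 j * w t 0 j = \sum_(j < d) w t 0 j ^+ 2 by apply: eq_bigr => j _; rewrite expr2.
apply: le_trans (ler_sum _ (fun j _ => hc j)) _.
rewrite -mulr_sumr ler_wpM2l ?ler0n // big_split /=.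
apply: lerD; rewrite le_eqVlt; apply/orP; left; apply/eqP.
  by apply: eq_bigr => j _; rewrite expr2.
rewrite exchange_big /=; apply: eq_bigr => j _.
by apply: eq_bigr => i _; rewrite expr2.
Qed.

End Main.

Unset Implicit Arguments.
Unset Strict Implicit.

Theorem mainTheorem9 (R : realType) (d N : nat) (X : 'M[R]_(d, N))
  (l : R -> R) (beta eta : R) (w m : nat -> 'rV[R]_d) (s1 : R) :
  (* A1: linear separability *)
  (exists u : 'rV[R]_d, forall i : 'I_N, 0 < margin X u i) ->
  (* A2 *)
  (forall x : R, derivable l x 1) ->
  (forall x : R, derive1 l x < 0) ->
  (l x @[x --> +oo] --> 0) ->
  (derive1 l x @[x --> +oo] --> 0) ->
  (limf_esup (fun x : R => (derive1 l x)%:E) (-oo%R : set_system R) < 0%E)%E ->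
  (exists mup xp : R, 0 < mup /\ 0 < xp /\
     forall x, xp < x -> - derive1 l x <= (1 + expR (- (mup * x))) * expR (- x)) ->
  (exists mum xm : R, 0 < mum /\ 0 < xm /\
     forall x, xm < x -> (1 - expR (- (mum * x))) * expR (- x) <= - derive1 l x) ->
  (* A3(D): H_{s0} is finite for every s0 *)
  (forall s0 : R, exists c : R, 0 <= c /\ forall x y, s0 <= x -> s0 <= y ->
       `|derive1 l x - derive1 l y| <= c * `|x - y|) ->
  (* step sizes *)
  0 <= beta < 1 ->
  (* s1 = l^{-1}(N L(w(1))) *)
  l s1 = N%:R * emp_loss l X (w 1%N) ->
  0 < eta ->
  eta < 2 * N%:R / (spectral_norm X ^+ 2 * lip_const_above (derive1 l) s1) ->
  (* GDM recursion, started from an arbitrary w(1) *)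
  m 0%N = 0 ->
  (forall t : nat, (1 <= t)%N ->
     m t = beta *: m t.-1 + (1 - beta) *: emp_grad l X (w t)) ->
  (forall t : nat, (1 <= t)%N -> w t.+1 = w t - eta *: m t) ->
  (\sum_(1 <= t <oo) ((enorm (w t.+1 - w t)) ^+ 2)%:E < +oo)%E /\
  (exists C : R, \forall t \near \oo, enorm (w t) <= C * Num.sqrt t%:R).
Proof.
move=> _ ld lneg lim0 _ _ _ _ A3 /andP[hb0 hb1] hf1 heta hstep hm0 hm hw.
set f1 := emp_loss l X (w 1%N).
have lp := l_pos ld lneg lim0.
have hN : (0 < N)%N.
  case: (posnP N) => // eN.
  have e0 : (N%:R : R) = 0 by rewrite eN.
  have := lp s1; by rewrite hf1 e0 mul0r ltxx.
have Np : 0 < N%:R :> R by rewrite ltr0n.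
set H := lip_const_above (derive1 l) s1.
have H0 : 0 <= H by apply: lip_ge0.
have sg0 : 0 <= sig X := sig_ge0 X.
have hpos : 0 < sig X ^+ 2 * H.
  rewrite lt_def mulr_ge0 ?sqr_ge0 // andbT; apply/negP => /eqP e.
  by move: hstep; rewrite /sig in e; rewrite e invr0 mulr0; move: heta; lra.
have hsig : 0 < sig X.
  rewrite lt_def sg0 andbT; apply/negP => /eqP e.
  by move: hpos; rewrite e expr0n /= mul0r ltxx.
have hst : eta * (H * sig X ^+ 2 / N%:R) < 2.
  move: hstep; rewrite /sig ltr_pdivlMr // => h.
  have -> : eta * (H * spectral_norm X ^+ 2 / N%:R) = eta * (spectral_norm X ^+ 2 * H) / N%:R by field; rewrite (gt_eqF Np).
  by rewrite ltr_pdivrMr //.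
have SB := @sum_bound R d N X l ld lneg s1 (A3 s1) lim0 beta eta f1 hb0 hb1 heta hN hsig hst hf1 w m hm0 hm hw erefl.
set B := f1 / _ in SB.
have sqe t : (1 <= t)%N -> enorm (w t.+1 - w t) ^+ 2 = sq (- eta *: m t).
  move=> ht; rewrite hw // addrAC subrr add0r enorm_rV sqr_sqrtr ?sq_ge0 //.
  by rewrite scaleNr.
split.
  apply: (@le_lt_trans _ _ B%:E); last by rewrite ltry.
  apply: lime_le.
    apply: is_cvg_ereal_nneg_natsum => n _; rewrite lee_fin; apply: sqr_ge0.
  apply: nearW => n.
  rewrite sumEFin lee_fin; apply: le_trans (SB n).
  rewrite le_eqVlt; apply/orP; left; apply/eqP.
  by rewrite big_nat_cond [RHS]big_nat_cond; apply: eq_bigr => i /andP[/andP[hi _] _]; rewrite sqe.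
have B0 : 0 <= B by apply: le_trans (SB 0%N); rewrite big_geq.
exists (Num.sqrt (sq (w 1%N) + B)).
near=> t.
have ht : (1 <= t)%N by near: t; exists 1%N.
rewrite enorm_rV mulrC -sqrtrM ?ler0n // ler_sqrt; last by rewrite mulr_ge0 ?ler0n // addr_ge0 ?sq_ge0.
apply: le_trans (w_bound hw ht) _.
by rewrite ler_wpM2l ?ler0n // lerD2l.
Unshelve. all: by end_near.
Qed.
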